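(* If $\mathcal I$ is a P-ideal on $\omega$, then $\mathfrak b_\sigma(\mathcal I)=\mathfrak b_s(\mathrm{Fin},\mathcal I,\mathcal I)=\min\{\mathfrak b,\mathrm{add}^*(\mathcal I)\}\le\mathrm{add}_\omega(\mathcal I)$.
   Context: An ideal on $\omega$ is a family $\mathcal I\subseteq\mathcal P(\omega)$ closed under finite unions and subsets, containing all finite sets, with $\omega\notin\mathcal I$; $\mathrm{Fin}$ is the ideal of finite subsets of $\omega$. $\mathcal I$ is a P-ideal if for every countable $\mathcal A\subseteq\mathcal I$ there is $B\in\mathcal I$ with $A\setminus B$ finite for all $A\in\mathcal A$. $\mathfrak b$ is the least size of a subset of $\omega^\omega$ unbounded with respect to eventual domination $\le^*$. Convention $\min\emptyset=\infty$, $\kappa<\infty$ for every cardinal. $\widehat{\mathcal P}_{\mathcal I}$ = sequences $(A_n)\in\mathcal I^\omega$ of pairwise disjoint sets; $\mathcal P_{\mathcal I}$ = those with $\bigcup_nA_n=\omega$; $\mathcal M_{\mathcal I}$ = sequences $(E_k)\in\mathcal I^\omega$ with $E_k\subseteq E_{k+1}$. $\mathfrak b_s(\mathcal I,\mathcal J,\mathcal K)=\min\{|\mathcal E|:\mathcal E\subseteq\widehat{\mathcal P}_{\mathcal K}$ and for every $(A_n)\in\mathcal P_{\mathcal J}$ there is $(E_n)\in\mathcal E$ with $\bigcup_n(A_{n+1}\cap\bigcup_{i\le n}E_i)\notin\mathcal I\}$; $\mathfrak b_\sigma(\mathcal I)=\min\{|\mathcal E|:\mathcal E\subseteq\mathcal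 M_{\mathcal I}$ and for every $(A_n)\in\mathcal M_{\mathcal I}$ there is $(E_n)\in\mathcal E$ with $E_n\not\subseteq A_n$ for infinitely many $n\}$; $\mathrm{add}_\omega(\mathcal I)=\min\{|\mathcal A|:\mathcal A\subseteq\mathcal I$ and for every $(B_n)\in\mathcal I^\omega$ there is $A\in\mathcal A$ with $A\not\subseteq B_n$ for all $n\}$; $\mathrm{add}^*(\mathcal I)=\min\{|\mathcal A|:\mathcal A\subseteq\mathcal I$ and for every $B\in\mathcal I$ there is $A\in\mathcal A$ with $A\setminus B$ infinite$\}$. *)

(* Defs.v *)
From mathcomp Require Import all_boot.
From mathcomp Require Import boolp classical_sets functions cardinality.
Set Implicit Arguments. Unset Strict Implicit. Unset Printing Implicit Defensive.
Local Open Scope classical_set_scope.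
Local Open Scope card_scope.

Definition is_ideal (I : set (set nat)) : Prop :=
  [/\ (forall A B, I A -> I B -> I (A `|` B)),
      (forall A B, B `<=` A -> I A -> I B),
      (forall A, finite_set A -> I A)
    & ~ I setT].

Definition Fin : set (set nat) := [set A | finite_set A].

Definition P_ideal (I : set (set nat)) : Prop :=
  forall A : nat -> set nat, (forall n, I (A n)) ->
    exists2 B, I B & forall n, finite_set (A n `\` B).

Definition le_star (f g : nat -> nat) : Prop :=
  exists N, forall n, (N <= n)%N -> (f n <= g n)%N.

Definition hatP (K : set (set nat)) (A : nat -> set nat) : Prop :=
  (forall n, K (A n)) /\ (forall n m, n <> m -> A n `&` A m = set0).
Definition Ppart (J : set (set nat)) (A : nat -> set nat) : Prop :=
  hatP J A /\ \bigcup_n A n = setT.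
Definition Mseq (I : set (set nat)) (E : nat -> set nat) : Prop :=
  (forall k, I (E k)) /\ (forall k, E k `<=` E k.+1).

(* A cardinal characteristic min{|E| : E : set T, P E}, with min of an empty
   class = infinity, is represented by its carrier type and witness property. *)
Record cchar := CChar { cc_T : Type ; cc_P : set cc_T -> Prop }.

(* min k <= min l : every l-witness is dominated in size by some k-witness
   (if l has no witness, min l = infinity and this holds trivially). *)
Definition cc_le (k l : cchar) : Prop :=
  forall F : set (cc_T l), cc_P F ->
    exists2 E : set (cc_T k), cc_P E & E #<= F.
Definition cc_eq (k l : cchar) : Prop := cc_le k l /\ cc_le l k.

(* min{k, l}: minimum over the union of both witness classes *)
Definition cc_min (k l : cchar) : cchar :=
  @CChar (cc_T k + cc_T l)%type
    (fun E => (exists2 E1 : set (cc_T k), cc_P E1 & E = inl @` E1) \/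
              (exists2 E2 : set (cc_T l), cc_P E2 & E = inr @` E2)).

Definition bfrak : cchar :=
  @CChar (nat -> nat) (fun E => ~ exists g, forall f, E f -> le_star f g).

Definition b_s (I J K : set (set nat)) : cchar :=
  @CChar (nat -> set nat) (fun E =>
    (forall e, E e -> hatP K e) /\
    forall A, Ppart J A -> exists2 e, E e &
      ~ I (\bigcup_n (A n.+1 `&` \bigcup_(i in [set i | (i <= n)%N]) e i))).

Definition b_sigma (I : set (set nat)) : cchar :=
  @CChar (nat -> set nat) (fun E =>
    (forall e, E e -> Mseq I e) /\
    forall A, Mseq I A -> exists2 e, E e &
      infinite_set [set n | ~ (e n `<=` A n)]).

Definition add_omega (I : set (set nat)) : cchar :=
  @CChar (set nat) (fun F =>
    F `<=` I /\
    forall B : nat -> set nat, (forall n, I (B n)) ->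
      exists2 A, F A & forall n, ~ (A `<=` B n)).

Definition add_star (I : set (set nat)) : cchar :=
  @CChar (set nat) (fun F =>
    F `<=` I /\
    forall B, I B -> exists2 A, F A & infinite_set (A `\` B)).

(* Main.v *)
Require Import Defs.
From mathcomp Require Import all_boot.
From mathcomp Require Import boolp classical_sets functions cardinality.
Set Implicit Arguments. Unset Strict Implicit. Unset Printing Implicit Defensive.
Local Open Scope classical_set_scope.
Local Open Scope card_scope.
Local Open Scope nat_scope.

Lemma fin_bound (A : set nat) : finite_set A -> exists n, forall x, A x -> x < n.
Proof.
move=> /finite_seqP [s ->]; elim: s => [|a s [n Hn]]; first by exists 0.
exists (maxn a.+1 n) => x /=; rewrite in_cons => /orP[/eqP ->|/Hn h].
  by rewrite leq_max leqnn.
by rewrite leq_max h orbT.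
Qed.

Lemma bound_fin (A : set nat) n : (forall x, A x -> x < n) -> finite_set A.
Proof. by move=> H; apply: (sub_finite_set (B := `I_n)) (finite_II n) => x /H. Qed.

Lemma fin_bigcup_le (e : nat -> set nat) n : (forall i, finite_set (e i)) ->
  finite_set (\bigcup_(i in [set i | (i <= n)%N]) e i).
Proof.
move=> H; apply: bigcup_finite => // ; apply: (bound_fin (n := n.+1)) => x /=.
by rewrite ltnS.
Qed.

Lemma I_bigcup_le (I : set (set nat)) (e : nat -> set nat) n : is_ideal I ->
  (forall i, I (e i)) -> I (\bigcup_(i in [set i | (i <= n)%N]) e i).
Proof.
case=> IU IS IF IT He; elim: n => [|n IH].
  apply: (IS (e 0)) (He 0) => x [i /= hi exi].
  by move: hi; rewrite leqn0 => /eqP Hi; rewrite Hi in exi.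
apply: (IS _ _ _ (IU _ _ IH (He n.+1))) => x [i /= hi exi].
move: hi; rewrite leq_eqVlt => /orP[/eqP Hi|hi]; first by right; rewrite -Hi.
by left; exists i.
Qed.

Lemma mseq_mono (E : nat -> set nat) : (forall k, E k `<=` E k.+1) ->
  forall i j, i <= j -> E i `<=` E j.
Proof.
move=> H i j /subnK <-; elim: (j - i) => [|k IH] //=.
by rewrite addSn; apply: subset_trans IH _; apply: H.
Qed.

Lemma cc_le_trans k l m : cc_le k l -> cc_le l m -> cc_le k m.
Proof.
move=> Hkl Hlm F PF; have [E PE HEF] := Hlm F PF; have [D PD HDE] := Hkl E PE.
by exists D => //; apply: card_le_trans HDE HEF.
Qed.

Lemma partA (I : set (set nat)) : is_ideal I ->
  cc_le (cc_min bfrak (add_star I)) (add_omega I).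
Proof.
move=> Hid; have [IU IS IF IT] := Hid.
move=> F [FI HF]; exists (inr @` F); last exact: card_image_le.
right; exists F => //; split => // B IB.
have [A FA HA] := HF (fun n => B `|` `I_n) (fun n => IU _ _ IB (IF _ (finite_II n))).
exists A => // /fin_bound [n Hn]; apply: (HA n) => x Ax.
have [Bx|nBx] := pselect (B x); first by left.
by right; apply: Hn.
Qed.

Definition dseq (E : nat -> set nat) : nat -> set nat :=
  fun i => match i with 0 => E 0 | i'.+1 => E i'.+1 `\` E i' end.

Lemma dseq_sub E i : dseq E i `<=` E i.
Proof. by case: i => [|i] //= x []. Qed.

Lemma dseq_cover E n : E n `<=` \bigcup_(i in [set i | (i <= n)%N]) dseq E i.
Proof.
elim: n => [|n IH] x Ex; first by exists 0.
have [Exn|nExn] := pselect (E n x).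
  by have [i /= hi dx] := IH x Exn; exists i => //=; apply: leqW.
by exists n.+1 => //=.
Qed.

Lemma partB (I : set (set nat)) : is_ideal I ->
  cc_le (b_s Fin I I) (b_sigma I).
Proof.
move=> Hid; have [IU IS IF IT] := Hid.
move=> F [HM Hw]; exists (dseq @` F); last exact: card_image_le.
split.
  move=> _ [E FE <-]; have [EI Einc] := HM E FE; split.
    by move=> n; apply: (IS _ _ (@dseq_sub E n)).
  have key : forall n m, n < m -> dseq E n `&` dseq E m = set0.
    move=> n [|m] //= hnm; rewrite ltnS in hnm; apply/seteqP; split => x //= [dn [Em nEm]].
    by apply: nEm; apply: (mseq_mono Einc hnm); apply: dseq_sub.
  move=> n m /eqP; rewrite neq_ltn => /orP[/key //|/key]; by rewrite setIC.
move=> A [[AI Adisj] Acov].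
pose At n := \bigcup_(i in [set i | (i <= n)%N]) A i.
have AtM : Mseq I At.
  split; first by move=> k; apply: I_bigcup_le.
  by move=> k x [i /= hi Aix]; exists i => //=; apply: leqW.
have [E FE HE] := Hw At AtM.
exists (dseq E); first by exists E.
move=> /fin_bound [k Hk].
have [M HM'] : exists M, forall x, x < k -> At M x.
  elim: k {Hk} => [|k [M HMk]]; first by exists 0.
  have : (\bigcup_n A n) k by rewrite Acov.
  move=> [m _ Amk]; exists (maxn M m) => x; rewrite ltnS leq_eqVlt => /orP[/eqP ->|hx].
    by exists m => //=; rewrite leq_maxr.
  by have [i /= hi Aix] := HMk x hx; exists i => //=; apply: leq_trans hi (leq_maxl _ _).
apply: HE; apply: (bound_fin (n := M)) => n /= HnE; rewrite ltnNge; apply/negP => hMn.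
apply: HnE => x Enx.
have : (\bigcup_n A n) x by rewrite Acov.
move=> [m _ Amx].
have [hmn|hnm] := leqP m n; first by exists m.
case: m hnm Amx => [//|m] hnm Amx.
have Sx : (\bigcup_n (A n.+1 `&` \bigcup_(i in [set i | (i <= n)%N]) dseq E i)) x.
  exists m => //; split => //; apply: dseq_cover.
  by rewrite ltnS in hnm; apply: (mseq_mono (HM E FE).2 hnm).
have [i /= hi Aix] := HM' x (Hk x Sx).
by exists i => //=; apply: leq_trans hi hMn.
Qed.

Fixpoint Fm (f : nat -> nat) (n : nat) : nat :=
  match n with 0 => f 0 | n'.+1 => maxn (Fm f n') (f n'.+1) end.

Lemma Fm_ge f n : f n <= Fm f n.
Proof. by case: n => [|n] //=; rewrite leq_maxr. Qed.

Lemma Fm_inc f n : Fm f n <= Fm f n.+1.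
Proof. by rewrite /= leq_maxl. Qed.

Definition Gseq (s : ((nat -> nat) + set nat)%type) : nat -> set nat :=
  match s with inl f => fun n => [set x | x <= Fm f n] | inr A => fun _ => A end.

Lemma partC (I : set (set nat)) : is_ideal I -> P_ideal I ->
  cc_le (b_sigma I) (cc_min bfrak (add_star I)).
Proof.
move=> Hid HP; have [IU IS IF IT] := Hid.
move=> F HF; exists (Gseq @` F); last exact: card_image_le.
case: HF => [[E1 HE1 ->]|[E2 [E2I HE2] ->]].
  split.
    move=> _ [_ [f _ <-] <-]; split => /=.
      by move=> k; apply: IF; apply: (bound_fin (n := (Fm f k).+1)).
    by move=> k x /= hx; apply: leq_trans hx (Fm_inc _ _).
  move=> B [BI Binc].
  have : forall n, exists x, ~ B n x.
    move=> n; apply/not_existsP => H; apply: IT.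
    by apply: (IS _ _ _ (BI n)) => x _; apply: contrapT; apply: H.
  move=> /choice [g Hg].
  apply: contrapT => Hno; apply: HE1; exists g => f E1f.
  have /contrapT : ~ infinite_set [set n | ~ (Gseq (inl f) n `<=` B n)].
    by move=> Hinf; apply: Hno; exists (Gseq (inl f)) => //; exists (inl f) => //; exists f.
  move=> /fin_bound [N HN]; exists N => n hNn.
  have Hsub : Gseq (inl f) n `<=` B n.
    apply: contrapT => Hn; have := HN n Hn; by rewrite ltnNge hNn.
  rewrite leqNgt; apply/negP => hgf; apply: (Hg n); apply: Hsub => /=.
  by apply: leq_trans (Fm_ge f n); apply: ltnW.
split.
  move=> _ [_ [A E2A <-] <-]; split.
  - by move=> k; change (I A); exact: (E2I A E2A).
  - by move=> k x.
move=> B [BI Binc].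
have [C IC HC] := HP B BI.
have [A E2A HA] := HE2 C IC.
exists (Gseq (inr A)); first by exists (inr A) => //; exists A.
move=> /fin_bound [N HN].
have Hsub : A `<=` B N.
  apply: contrapT => Hn; have := HN N Hn; by rewrite ltnn.
apply: HA; apply: (sub_finite_set _ (HC N)) => x [Ax nCx]; split => //.
exact: Hsub.
Qed.

Fixpoint Gm (g : nat -> nat) (n : nat) : nat :=
  match n with 0 => g 0 | n'.+1 => (maxn (Gm g n') (g n'.+1)).+1 end.

Lemma Gm_ge g n : g n <= Gm g n.
Proof. by case: n => [|n] //=; apply: leqW; rewrite leq_maxr. Qed.

Lemma Gm_lt g n : Gm g n < Gm g n.+1.
Proof. by rewrite /= ltnS leq_maxl. Qed.

Lemma Gm_mono g i j : i <= j -> Gm g i <= Gm g j.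
Proof.
move=> /subnK <-; elim: (j - i) => [|k IH] //.
by rewrite addSn; apply: leq_trans IH (ltnW (Gm_lt _ _)).
Qed.

Lemma Gm_geid g n : n <= Gm g n.
Proof. elim: n => [|n IH] //; exact: leq_ltn_trans IH (Gm_lt _ _). Qed.

Lemma Gm_locate g x : x < Gm g 0 \/ exists n, (Gm g n <= x < Gm g n.+1).
Proof.
have H : forall k, x < Gm g k -> x < Gm g 0 \/ exists n, (Gm g n <= x < Gm g n.+1).
  elim=> [|k IH] hk; first by left.
  have [hx|hx] := ltnP x (Gm g k); first exact: IH.
  by right; exists k; rewrite hx hk.
exact: (H x.+1 (Gm_geid g x.+1)).
Qed.

Lemma partD (I : set (set nat)) : is_ideal I -> P_ideal I ->
  cc_le (cc_min bfrak (add_star I)) (b_s Fin I I).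
Proof.
move=> Hid HP; have [IU IS IF IT] := Hid.
move=> F [Hh Hw].
have : forall e : nat -> set nat, exists B, hatP I e -> I B /\ forall n, finite_set (e n `\` B).
  move=> e; have [He|nHe] := pselect (hatP I e).
    by have [B IB HB] := HP e He.1; exists B.
  by exists set0.
move=> /choice [pu Hpu].
have [Hcase|Hcase] := pselect (forall C, I C -> exists2 e, F e & infinite_set (pu e `\` C)).
  exists (inr @` (pu @` F)).
    right; exists (pu @` F) => //; split.
      by move=> _ [e Fe <-]; exact: (Hpu e (Hh e Fe)).1.
    by move=> C IC; have [e Fe He] := Hcase C IC; exists (pu e) => //; exists e.
  by apply: card_le_trans (card_image_le _ _) (card_image_le _ _).
have [C IC HC] : exists2 C, I C & forall e, F e -> finite_set (pu e `\` C).
  apply: contrapT => Hn; apply: Hcase => C IC; apply: contrapT => Hn2; apply: Hn.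
  by exists C => // e Fe; apply: contrapT => Hinf; apply: Hn2; exists e.
have Hfin : forall e, F e -> forall n,
    finite_set ((\bigcup_(i in [set i | (i <= n)%N]) e i) `\` C).
  move=> e Fe n; have [Ipu Hpe] := Hpu e (Hh e Fe).
  apply: (sub_finite_set (B := \bigcup_(i in [set i | (i <= n)%N])
                                 ((e i `\` pu e) `|` (pu e `\` C)))).
    move=> x [[i hi eix] nCx]; exists i => //.
    by have [pux|npux] := pselect (pu e x); [right|left]; split.
  by apply: fin_bigcup_le => i; rewrite finite_setU; split => //; apply: HC.
have : forall e : nat -> set nat, exists f : nat -> nat, forall n, F e ->
    forall x, ((\bigcup_(i in [set i | (i <= n)%N]) e i) `\` C) x -> x < f n.
  move=> e.
  have /choice [f Hf] : forall n, exists m, F e ->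
      forall x, ((\bigcup_(i in [set i | (i <= n)%N]) e i) `\` C) x -> x < m.
    move=> n; have [Fe|nFe] := pselect (F e); last by exists 0.
    by have [m Hm] := fin_bound (Hfin e Fe n); exists m.
  by exists f.
move=> /choice [h Hh'].
exists (inl @` (h @` F)); last first.
  by apply: card_le_trans (card_image_le _ _) (card_image_le _ _).
left; exists (h @` F) => //.
move=> [g Hg].
pose A n := match n with
  | 0 => C `|` [set x | x < Gm g 0]
  | n'.+1 => [set x | (Gm g n' <= x < Gm g n'.+1) /\ ~ C x] end.
have PA : Ppart I A.
  split; [split|].
  - case=> [|n] /=.
      by apply: IU IC (IF _ (bound_fin (n := Gm g 0) _)).
    by apply: IF; apply: (bound_fin (n := Gm g n.+1)) => x [/andP [_ ?] _].
  - have key : forall n m, n < m -> A n `&` A m = set0.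
      move=> n [|m] // hnm; rewrite ltnS in hnm; apply/seteqP; split => x // [].
      case: n hnm => [|n] hnm /=.
        move=> [Cx|x0] [/andP[h1 h2] nCx] //.
        by have := leq_trans x0 (Gm_mono g (leq0n m)); rewrite ltnNge h1.
      move=> [/andP[h1 h2] _] [/andP[h3 h4] _].
      by have := leq_trans h2 (Gm_mono g hnm); rewrite ltnNge h3.
    move=> n m /eqP; rewrite neq_ltn => /orP[/key //|/key]; by rewrite setIC.
  - apply/seteqP; split => x // _.
    have [x0|[n /andP[h1 h2]]] := Gm_locate g x; first by exists 0 => //; right.
    have [Cx|nCx] := pselect (C x); first by exists 0 => //; left.
    by exists n.+1 => //=; split => //; apply/andP.
have [e He HS] := Hw A PA.
apply: HS.
have [N HN] := Hg (h e) (ex_intro2 _ _ e He erefl).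
apply: (bound_fin (n := Gm g N)) => x [n _ [An Ux]].
case: An => /andP[h1 h2] nCx.
have [hnN|hNn] := ltnP n N; first exact: leq_trans h2 (Gm_mono g hnN).
have := Hh' e n He x (conj Ux nCx) => hx.
have := leq_trans (leq_trans (HN n hNn) (Gm_ge g n)) h1.
by rewrite leqNgt hx.
Qed.

Theorem corollary5p9 (I : set (set nat)) :
  is_ideal I -> P_ideal I ->
  [/\ cc_eq (b_sigma I) (b_s Fin I I),
      cc_eq (b_s Fin I I) (cc_min bfrak (add_star I))
    & cc_le (cc_min bfrak (add_star I)) (add_omega I)].
Proof.
move=> Hid HP.
have B := partB Hid; have C := partC Hid HP; have D := partD Hid HP.
split; [split|split|exact: partA].
- exact: cc_le_trans C D.
- exact: B.
- exact: cc_le_trans B C.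
- exact: D.
Qed.
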